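(* For any $f\in LC(O,K)$, any integers $m\ge0$, $n\ge0$, and any $x\in O$, $$\big((\Delta-[m]I)^nf\big)(x)=\sum_{i=0}^n\sum_{j=i}^n(-1)^{n-i}\binom{n}{j}[m]^{n-j}f(T^ix)\,\mathcal{D}_i(T^j).$$
   Context: Let $q$ be a prime power, $K=\mathbf{F}_q((T))$, $O=\mathbf{F}_q[[T]]$, and $LC(O,K)$ the space of continuous $\mathbf{F}_q$-linear functions $O\to K$. Put $[m]=T^{q^m}-T$ (so $[0]=0$). Hasse derivatives: $\mathcal{D}_n(\sum_ia_iT^i)=\sum_i\binom{i}{n}a_iT^{i-n}$ (binomials in $\mathbf{F}_q$). The Carlitz difference operator $\Delta$ on $LC(O,K)$ is $(\Delta f)(x)=f(Tx)-Tf(x)$, and $I$ is the identity operator; $\binom{n}{j}$ is read in $\mathbf{F}_q$. *)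

(* Defs.v *)
From HB Require Import structures.
From mathcomp Require Import all_boot all_order all_algebra.
From mathcomp Require Import boolp.
From Stdlib Require Import ProofIrrelevance FunctionalExtensionality.
Set Implicit Arguments. Unset Strict Implicit. Unset Printing Implicit Defensive.
Import Order.TTheory GRing.Theory Num.Theory.
Local Open Scope ring_scope.

Section Series.
Variable F : fieldType.

(* O = F[[T]] : formal power series, given by coefficient functions. *)
Record pser := PSer { pcoef : nat -> F }.

Definition addO (a b : pser) := PSer (fun k => pcoef a k + pcoef b k).
Definition scaleO (c : F) (a : pser) := PSer (fun k => c * pcoef a k).
Definition oneO := PSer (fun k => (k == 0%N)%:R).
Definition TO := PSer (fun k => (k == 1%N)%:R).
Definition mulO (a b : pser) :=
  PSer (fun k => \sum_(i < k.+1) pcoef a i * pcoef b (k - i)).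
Definition expO (a : pser) (n : nat) := iter n (mulO a) oneO.

(* K = F((T)) : formal Laurent series = coefficient functions Z -> F with
   support bounded below. *)
Definition laurent_pred (a : int -> F) := exists N : int, forall k, k < N -> a k = 0.
Record lser := MkL { lcoef : int -> F; lcoefP : laurent_pred lcoef }.

Lemma lser_ext (a b : lser) : lcoef a =1 lcoef b -> a = b.
Proof.
case: a b => a Pa [b Pb] /= /functional_extensionality eab.
subst b; congr MkL; exact: proof_irrelevance.
Qed.

Definition lbound (a : lser) : int := projT1 (cid (lcoefP a)).
Lemma lboundP (a : lser) k : k < lbound a -> lcoef a k = 0.
Proof. rewrite /lbound; case: cid => N HN /=; exact: HN. Qed.

Lemma zeroL_pred : laurent_pred (fun _ => 0).
Proof. by exists 0. Qed.
Definition zeroL := MkL zeroL_pred.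

Lemma addL_pred (a b : lser) : laurent_pred (fun k => lcoef a k + lcoef b k).
Proof.
exists (Num.min (lbound a) (lbound b)) => k hk.
rewrite !lboundP ?addr0 //.
  by apply: (lt_le_trans hk); rewrite ge_min lexx orbT.
by apply: (lt_le_trans hk); rewrite ge_min lexx.
Qed.
Definition addL a b := MkL (addL_pred a b).

Lemma oppL_pred (a : lser) : laurent_pred (fun k => - lcoef a k).
Proof. by exists (lbound a) => k hk; rewrite lboundP ?oppr0. Qed.
Definition oppL a := MkL (oppL_pred a).

Lemma scaleL_pred (c : F) (a : lser) : laurent_pred (fun k => c * lcoef a k).
Proof. by exists (lbound a) => k hk; rewrite lboundP ?mulr0. Qed.
Definition scaleL c a := MkL (scaleL_pred c a).

Lemma addLA : associative addL.
Proof. by move=> a b c; apply: lser_ext => k /=; rewrite addrA. Qed.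
Lemma addLC : commutative addL.
Proof. by move=> a b; apply: lser_ext => k /=; rewrite addrC. Qed.
Lemma add0L : left_id zeroL addL.
Proof. by move=> a; apply: lser_ext => k /=; rewrite add0r. Qed.
Lemma addNL : left_inverse zeroL oppL addL.
Proof. by move=> a; apply: lser_ext => k /=; rewrite addNr. Qed.

HB.instance Definition _ := gen_eqMixin lser.
HB.instance Definition _ := gen_choiceMixin lser.
HB.instance Definition _ := GRing.isZmodule.Build lser addLA addLC add0L addNL.

(* Cauchy product of Laurent series: the coefficient of T^k is
   sum_{i} a_i b_{k-i}, a finite sum over lbound a <= i <= k - lbound b. *)
Definition mulL_coef (a b : lser) (k : int) : F :=
  let Na := lbound a in let Nb := lbound b in
  if Na + Nb <= k then
    \sum_(j < (absz (k - Na - Nb)%R).+1) lcoef a (Na + j%:Z) * lcoef b (k - Na - j%:Z)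
  else 0.
Lemma mulL_pred (a b : lser) : laurent_pred (mulL_coef a b).
Proof.
exists (lbound a + lbound b) => k hk; rewrite /mulL_coef.
by rewrite leNgt hk.
Qed.
Definition mulL a b := MkL (mulL_pred a b).

Lemma polyL_pred (p : int -> F) : laurent_pred (fun k => if k is Posz n then p k else 0).
Proof. by exists 0 => -[n|n] //=; rewrite ltNge. Qed.

Definition oneL := MkL (polyL_pred (fun k => (k == 0)%:R)).
Definition TL := MkL (polyL_pred (fun k => (k == 1)%:R)).
Definition expL (a : lser) (n : nat) := iter n (mulL a) oneL.

Lemma ofO_pred (a : pser) :
  laurent_pred (fun k => if k is Posz n then pcoef a n else 0).
Proof. by exists 0 => -[n|n] //=; rewrite ltNge. Qed.
Definition ofO (a : pser) := MkL (ofO_pred a).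

(* Generalised binomial coefficient binom(i, n) for i in Z, n in N:
   i (i-1) ... (i-n+1) / n!. *)
Definition binomZ (i : int) (n : nat) : int :=
  match i with
  | Posz m => ('C(m, n))%:Z
  | Negz m => (-1) ^+ n * ('C(n + m, n))%:Z   (* i = -(m+1) *)
  end.

(* Hasse derivative: D_n (sum_i a_i T^i) = sum_i binom(i,n) a_i T^(i-n). *)
Lemma hasseD_pred (n : nat) (a : lser) :
  laurent_pred (fun k => (binomZ (k + n%:Z) n)%:~R * lcoef a (k + n%:Z)).
Proof.
exists (lbound a - n%:Z) => k hk; rewrite lboundP ?mulr0 //.
by rewrite -ltrBrDr.
Qed.
Definition hasseD (n : nat) (a : lser) := MkL (hasseD_pred n a).

(* Topology: T-adic; agreement of the coefficients below a given degree. *)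
Definition O_close (M : nat) (x y : pser) := forall k, (k < M)%N -> pcoef x k = pcoef y k.
Definition K_close (N : int) (u v : lser) := forall k, k < N -> lcoef u k = lcoef v k.

Definition continuousOK (f : pser -> lser) :=
  forall x : pser, forall N : int, exists M : nat,
    forall y : pser, O_close M x y -> K_close N (f x) (f y).
Definition linearOK (f : pser -> lser) :=
  (forall x y, f (addO x y) = f x + f y) /\
  (forall (c : F) x, f (scaleO c x) = scaleL c (f x)).
Definition LC (f : pser -> lser) := continuousOK f /\ linearOK f.

Definition Delta (f : pser -> lser) : pser -> lser :=
  fun x => f (mulO TO x) - mulL TL (f x).

End Series.

Definition bracket (F : finFieldType) (m : nat) : lser F :=
  expL (TL F) (#|F| ^ m)%N - TL F.

Definition DeltaM (F : finFieldType) (m : nat) (f : pser F -> lser F) :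
  pser F -> lser F :=
  fun x => Delta f x - mulL (bracket F m) (f x).

(* Main.v *)
Require Import Defs.
From HB Require Import structures.
From mathcomp Require Import all_boot all_order all_algebra.
From mathcomp Require Import zify ring lra.
From Stdlib Require Import FunctionalExtensionality.
Set Implicit Arguments. Unset Strict Implicit. Unset Printing Implicit Defensive.
Import Order.TTheory GRing.Theory Num.Theory.
Local Open Scope ring_scope.


Section Ring.
Variable F : fieldType.
Local Notation L := (lser F).

Definition vb (a : L) (M : int) := forall k, k < M -> lcoef a k = 0.

Lemma vb_lbound a : vb a (lbound a). Proof. exact: lboundP. Qed.
Arguments vb_lbound a : clear implicits.
Lemma vb_le a M M' : vb a M -> M' <= M -> vb a M'.
Proof. by move=> h le k hk; apply: h; exact: lt_le_trans hk le. Qed.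
Lemma vb_max a M M' : vb a M -> vb a M' -> vb a (Num.max M M').
Proof.
move=> h h' k; rewrite lt_max => /orP[/h|/h'] //.
Qed.

Definition W (a b : L) (l : int) (N : nat) (k : int) :=
  \sum_(j < N) lcoef a (l + j%:Z) * lcoef b (k - l - j%:Z).

Lemma Wext a b l k Lb N N' : vb b Lb -> k - l - Lb < N%:Z -> k - l - Lb < N'%:Z ->
  W a b l N k = W a b l N' k.
Proof.
move=> hb.
wlog le : N N' / (N <= N')%N.
  move=> H h1 h2; case: (leqP N N') => le; first exact: H.
  by symmetry; apply: H => //; exact: ltnW.
move=> h1 _; rewrite -(subnKC le); elim: (N' - N)%N => [|d IH]; first by rewrite addn0.
rewrite {1}IH /W addnS big_ord_recr /=.
rewrite (hb (k - l - (N + d)%:Z)) ?mulr0 ?addr0 //.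
lia.
Qed.

Lemma Wshift a b l k N : vb a (l + 1) -> W a b l N.+1 k = W a b (l + 1) N k.
Proof.
move=> ha; rewrite /W big_ord_recl /= (ha (l + 0%:Z)) ?mul0r ?add0r; last lia.
apply: eq_bigr => j _; congr (lcoef _ _ * lcoef _ _); rewrite /bump /=; lia.
Qed.

Lemma Wshiftn a b (l : int) k N d : vb a (l + d%:Z) -> W a b l (N + d) k = W a b (l + d%:Z) N k.
Proof.
move: l; elim: d => [|d IH] l ha; first by rewrite addn0 addr0.
rewrite addnS Wshift; last by apply: (vb_le ha); lia.
rewrite IH; last by apply: (vb_le ha); lia.
by congr W; lia.
Qed.

Lemma W0 a b l k : W a b l 0 k = 0.
Proof. by rewrite /W big_ord0. Qed.

Lemma mulL_Wcanon a b k N : k - lbound a - lbound b < N%:Z ->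
  lcoef (mulL a b) k = W a b (lbound a) N k.
Proof.
move=> hN; rewrite /= /mulL_coef.
case: ifP => hk.
  transitivity (W a b (lbound a) (absz (k - lbound a - lbound b)%R).+1 k); first by [].
  apply: (Wext a (vb_lbound b)) => //; lia.
rewrite /W big1 // => j _.
rewrite (vb_lbound b) ?mulr0 //.
move: hk; rewrite leNgt => /negbFE; lia.
Qed.

Lemma mulL_W a b La Lb l k N : vb a La -> vb b Lb -> l <= La -> k - l - Lb < N%:Z ->
  lcoef (mulL a b) k = W a b l N k.
Proof.
move=> ha hb hl hN.
set M := Num.min l (lbound a).
set Lb' := Num.max Lb (lbound b).
have hb' : vb b Lb' by apply: vb_max => //; exact: vb_lbound.
have ha' : vb a (Num.max La (lbound a)) by apply: vb_max => //; exact: vb_lbound.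
pose N1 := (absz (k - lbound a - lbound b)%R).+1.
rewrite (@mulL_Wcanon _ _ _ N1); last by rewrite /N1; lia.
have d1 : lbound a = M + (absz (lbound a - M)%R)%:Z by rewrite /M; lia.
have d2 : l = M + (absz (l - M)%R)%:Z by rewrite /M; lia.
rewrite [in LHS]d1 -Wshiftn -?d1; last by apply: (vb_le ha'); rewrite /M; lia.
rewrite [in RHS]d2 -Wshiftn -?d2; last by apply: (vb_le ha'); rewrite /M; lia.
apply: (Wext a hb'); rewrite /N1 /Lb' /M; lia.
Qed.


Lemma vb_mul a b La Lb : vb a La -> vb b Lb -> vb (mulL a b) (La + Lb).
Proof.
move=> ha hb k hk; rewrite (@mulL_W a b La Lb La k 0) ?W0 //; lia.
Qed.

Lemma lcoef_one k : lcoef (oneL F) k = (k == 0)%:R.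
Proof. by case: k. Qed.
Lemma lcoef_T k : lcoef (TL F) k = (k == 1)%:R.
Proof. by case: k. Qed.
Lemma vb_one : vb (oneL F) 0.
Proof. by move=> k hk; rewrite lcoef_one; case: eqP => // e; move: hk; rewrite e. Qed.
Lemma vb_T : vb (TL F) 0.
Proof. by move=> k hk; rewrite lcoef_T; case: eqP => // e; move: hk; rewrite e. Qed.

Lemma sum_delta N i (g : nat -> F) :
  \sum_(j < N) (j == i :> nat)%:R * g j = if (i < N)%N then g i else 0.
Proof.
rewrite -[RHS](@big_ord1_eq F 0 +%R g i N) [RHS]big_mkcond /=; apply: eq_bigr => j _.
by case: eqP => _; rewrite ?mul1r ?mul0r.
Qed.

Lemma mulLC : commutative (@mulL F).
Proof.
move=> a b; apply: lser_ext => k.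
set l := Num.min (lbound a) (lbound b).
have ha : l <= lbound a by rewrite /l; lia.
have hb : l <= lbound b by rewrite /l; lia.
case: (ltP k (l + l)) => hk.
  rewrite (@mulL_W a b _ _ l k 0 (vb_lbound a) (vb_lbound b)) ?W0 //; last lia.
  rewrite (@mulL_W b a _ _ l k 0 (vb_lbound b) (vb_lbound a)) ?W0 //; lia.
pose N := (absz (k - l - l)%R).+1.
rewrite (@mulL_W a b _ _ l k N (vb_lbound a) (vb_lbound b)) //; last by rewrite /N; lia.
rewrite (@mulL_W b a _ _ l k N (vb_lbound b) (vb_lbound a)) //; last by rewrite /N; lia.
rewrite /W (reindex_inj rev_ord_inj) /=; apply: eq_bigr => j _.
rewrite mulrC; congr (lcoef _ _ * lcoef _ _); have := ltn_ord j; rewrite /N; lia.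
Qed.

Lemma mul1L : left_id (oneL F) (@mulL F).
Proof.
move=> a; apply: lser_ext => k.
pose N := (absz (k - lbound a)%R).+1.
rewrite (@mulL_W _ a _ _ 0 k N vb_one (vb_lbound a)) //; last by rewrite /N; lia.
rewrite /W (eq_bigr (fun j : 'I_N => (j == 0%N :> nat)%:R * lcoef a (k - j%:Z))).
  by rewrite (sum_delta N 0 (fun j : nat => lcoef a (k - j%:Z))) /= subr0.
by move=> j _; rewrite add0r lcoef_one eqz_nat subr0.
Qed.

Lemma mulLDl : left_distributive (@mulL F) (@addL F).
Proof.
move=> a b c; apply: lser_ext => k.
set l := Num.min (lbound a) (lbound b).
have ha : vb a l by apply: (vb_le (vb_lbound a)); rewrite /l; lia.
have hb : vb b l by apply: (vb_le (vb_lbound b)); rewrite /l; lia.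
have hab : vb (addL a b) l by move=> k' hk'; rewrite /= ha ?hb ?addr0.
pose N := (absz (k - l - lbound c)%R).+1.
transitivity (lcoef (mulL a c) k + lcoef (mulL b c) k); last by [].
rewrite (@mulL_W (addL a b) c _ _ l k N hab (vb_lbound c)) //; last by rewrite /N; lia.
rewrite (@mulL_W a c _ _ l k N ha (vb_lbound c)) //; last by rewrite /N; lia.
rewrite (@mulL_W b c _ _ l k N hb (vb_lbound c)) //; last by rewrite /N; lia.
by rewrite /W -big_split; apply: eq_bigr => j _; rewrite /= mulrDl.
Qed.

Lemma mulLA : associative (@mulL F).
Proof.
move=> a b c; apply: lser_ext => k.
set l := Num.min (lbound a) (Num.min (lbound b) (lbound c)).
have ha : l <= lbound a by rewrite /l; lia.
have hb : l <= lbound b by rewrite /l; lia.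
have hc : l <= lbound c by rewrite /l; lia.
pose N := (absz (k - l - l - l)%R).+1.
have hab : vb (mulL a b) (l + l).
  apply: (vb_le (vb_mul (vb_lbound a) (vb_lbound b))); lia.
have hbc : vb (mulL b c) (lbound b + lbound c) by apply: vb_mul; exact: vb_lbound.
rewrite (@mulL_W (mulL a b) c _ _ (l + l) k N hab (vb_lbound c)) //; last by rewrite /N; lia.
rewrite (@mulL_W a (mulL b c) _ _ l k N (vb_lbound a) hbc) //; last by rewrite /N; lia.
rewrite /W.
rewrite [RHS](eq_bigr (fun j : 'I_N => \sum_(u < N) lcoef a (l + u%:Z) *
      (lcoef b (l - u%:Z + j%:Z) * lcoef c (k - (l + l) - j%:Z)))); last first.
  move=> j _.
  rewrite (@mulL_W a b _ _ l _ N (vb_lbound a) (vb_lbound b)) //; last by have := ltn_ord j; lia.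
  rewrite /W mulr_suml; apply: eq_bigr => u _; rewrite -mulrA; congr (_ * (lcoef _ _ * _)); lia.
rewrite exchange_big; apply: eq_bigr => u _.
rewrite (@mulL_W b c _ _ (l - u%:Z) _ N (vb_lbound b) (vb_lbound c)); last 2 first.
- lia.
- rewrite /N; lia.
rewrite /W mulr_sumr; apply: eq_bigr => j _; congr (_ * (_ * lcoef _ _)); lia.
Qed.

Lemma oneL_neq0 : oneL F != 0.
Proof.
apply/eqP => /(congr1 (fun x => lcoef x 0)); rewrite lcoef_one /= => /eqP.
by rewrite oner_eq0.
Qed.

End Ring.
Arguments vb_lbound {F} a.

HB.instance Definition _ (F : fieldType) :=
  GRing.Zmodule_isComNzRing.Build (lser F) (@mulLA F) (@mulLC F) (@mul1L F) (@mulLDl F) (@oneL_neq0 F).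


Section Main.
Variable F : fieldType.
Local Notation L := (lser F).

Lemma mulLE (a b : L) : mulL a b = a * b. Proof. by []. Qed.
Lemma expLE (a : L) n : expL a n = a ^+ n.
Proof. elim: n => [|n IH] //; by rewrite exprS -IH. Qed.

Lemma lcoef_natmul (a : L) n k : lcoef (a *+ n) k = lcoef a k *+ n.
Proof. elim: n => [|n IH] //; by rewrite !mulrS -IH. Qed.

Lemma lcoefN (a : L) k : lcoef (- a) k = - lcoef a k. Proof. by []. Qed.
Lemma lcoefD (a b : L) k : lcoef (a + b) k = lcoef a k + lcoef b k. Proof. by []. Qed.

Lemma lcoef_sign (a : L) e k : lcoef ((-1) ^+ e * a) k = (-1) ^+ e * lcoef a k.
Proof.
elim: e => [|e IH]; first by rewrite !expr0 !mul1r.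
by rewrite !exprS -!mulrA mulN1r lcoefN IH mulN1r.
Qed.

Lemma lcoef_mulT (a : L) k : lcoef (TL F * a) k = lcoef a (k - 1).
Proof.
pose N := (absz (k - lbound a)%R).+2.
rewrite -mulLE (@mulL_W _ _ _ _ _ 0 k N (@vb_T F) (vb_lbound a)) //; last by rewrite /N; lia.
rewrite /W (eq_bigr (fun j : 'I_N => (j == 1%N :> nat)%:R * lcoef a (k - j%:Z))).
  by rewrite (sum_delta N 1 (fun j : nat => lcoef a (k - j%:Z))) /=.
by move=> j _; rewrite add0r lcoef_T eqz_nat subr0.
Qed.

Lemma lcoef_Tn j k : lcoef (TL F ^+ j) k = (k == j%:Z)%:R.
Proof.
elim: j k => [|j IH] k; first by rewrite expr0 lcoef_one.
rewrite exprS lcoef_mulT IH; congr (_%:R); apply/eqP/eqP; lia.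
Qed.

Lemma hasse_Tn i j : (i <= j)%N -> hasseD i (TL F ^+ j) = 'C(j, i)%:R * TL F ^+ (j - i).
Proof.
move=> hij; apply: lser_ext => k.
transitivity ((binomZ (k + i%:Z) i)%:~R * lcoef (TL F ^+ j) (k + i%:Z)); first by [].
rewrite mulr_natl lcoef_natmul !lcoef_Tn.
have [e|ne] := eqVneq (k + i%:Z) j%:Z.
  have -> : (k == (j - i)%N%:Z) by apply/eqP; lia.
  by rewrite e /= -pmulrn mulr1.
have -> : (k == (j - i)%N%:Z) = false by apply/eqP; lia.
by rewrite mulr0 mul0rn.
Qed.

Lemma scaleLE e c (X : L) : scaleL ((-1) ^+ e * c%:R) X = ((-1) ^+ e * X) *+ c.
Proof.
apply: lser_ext => k.
transitivity (((-1) ^+ e * c%:R) * lcoef X k); first by [].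
by rewrite lcoef_natmul lcoef_sign -mulr_natr; ring.
Qed.

Lemma pser_ext (a b : pser F) : pcoef a =1 pcoef b -> a = b.
Proof. by case: a b => a [b] /= /functional_extensionality ->. Qed.

Lemma pcoef_mulT (y : pser F) k :
  pcoef (mulO (TO F) y) k = if k is k'.+1 then pcoef y k' else 0.
Proof.
transitivity (\sum_(u < k.+1) (u == 1%N :> nat)%:R * pcoef y (k - u)); first by [].
rewrite (sum_delta k.+1 1 (fun u => pcoef y (k - u))); case: k => [|k] //=; by rewrite subSS subn0.
Qed.

Lemma pcoef_expT i k : pcoef (expO (TO F) i) k = (k == i)%:R.
Proof.
elim: i k => [|i IH] k; first by [].
transitivity (pcoef (mulO (TO F) (expO (TO F) i)) k); first by [].
by rewrite pcoef_mulT; case: k => [|k] //=; rewrite IH.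
Qed.

Lemma pcoef_mulTi i (y : pser F) k :
  pcoef (mulO (expO (TO F) i) y) k = if (i <= k)%N then pcoef y (k - i) else 0.
Proof.
transitivity (\sum_(u < k.+1) pcoef (expO (TO F) i) u * pcoef y (k - u)); first by [].
under eq_bigr do rewrite pcoef_expT.
by rewrite (sum_delta k.+1 i (fun u => pcoef y (k - u))).
Qed.

Lemma mulT_expT i (x : pser F) :
  mulO (TO F) (mulO (expO (TO F) i) x) = mulO (expO (TO F) i.+1) x.
Proof.
apply: pser_ext => k; rewrite pcoef_mulT; case: k => [|k]; rewrite !pcoef_mulTi // ltnS subSS.
Qed.

Lemma expT0 (x : pser F) : mulO (expO (TO F) 0) x = x.
Proof. by apply: pser_ext => k; rewrite pcoef_mulTi subn0. Qed.

End Main.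

Lemma pascal (R : comNzRingType) (c : R) (z : nat -> R) n :
  \sum_(i < n.+1) (c ^+ (n - i) * z i.+1) *+ 'C(n, i) +
  \sum_(i < n.+1) (c ^+ (n.+1 - i) * z i) *+ 'C(n, i)
  = \sum_(i < n.+2) (c ^+ (n.+1 - i) * z i) *+ 'C(n.+1, i).
Proof.
rewrite [RHS]big_ord_recl [X in _ = _ + X](eq_bigr (fun i : 'I_n.+1 =>
   (c ^+ (n - i) * z i.+1) *+ 'C(n, i) + (c ^+ (n - i) * z i.+1) *+ 'C(n, i.+1))); last first.
  by move=> i _; rewrite /= /bump /= add1n subSS binS mulrnDr addrC.
rewrite /= big_split /= addrCA; congr (_ + _).
rewrite [in LHS]big_ord_recl [in RHS]big_ord_recr /= (bin_small (ltnSn n)) mulr0n addr0 !bin0.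
congr (_ + _); apply: eq_bigr => i _; by rewrite /= /bump /= add1n subSS.
Qed.


Lemma binC2 n i l : (i + l <= n)%N -> ('C(n - i, l) * 'C(n, i) = 'C(i + l, i) * 'C(n, i + l))%N.
Proof.
move=> h.
have f1 := bin_fact (leq_trans (leq_addr l i) h).
have hl : (l <= n - i)%N by lia.
have f2 := bin_fact hl.
have f3 := bin_fact h.
have f4 := bin_fact (leq_addr l i).
rewrite addKn in f4; rewrite subnDA in f3.
apply/eqP; rewrite -(@eqn_pmul2r (i`! * l`! * (n - i - l)`!)) ?muln_gt0 ?fact_gt0 //; apply/eqP.
transitivity n`!.
  by rewrite -[in RHS]f1 -[in RHS]f2; ring.
by rewrite -[in LHS]f3 -[in LHS]f4; ring.
Qed.

Lemma final_alg (R : comNzRingType) (s b t y : R) (c1 c2 c3 c4 : nat) :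
  (c1 * c2 = c3 * c4)%N ->
  s * (b * t *+ c1) * y *+ c2 = s * (b * y * (c3%:R * t)) *+ c4.
Proof.
move=> e.
rewrite -[b * t *+ c1]mulr_natr -[_ *+ c2]mulr_natr -[_ *+ c4]mulr_natr.
transitivity (s * b * t * y * (c1 * c2)%:R); first by rewrite natrM; ring.
by rewrite e natrM; ring.
Qed.

Section Final.
Variable F : finFieldType.
Variable m : nat.
Local Notation L := (lser F).
Local Notation B := (bracket F m).
Local Notation c := (- (B + TL F)).

Lemma DeltaME (g : pser F -> L) x : DeltaM m g x = g (mulO (TO F) x) + c * g x.
Proof. rewrite /DeltaM /Delta !mulLE; ring. Qed.

Lemma iterD n : forall (f : pser F -> L) x, iter n (DeltaM m) f x =
  \sum_(i < n.+1) (c ^+ (n - i) * f (mulO (expO (TO F) i) x)) *+ 'C(n, i).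
Proof.
elim: n => [|n IH] f x.
  by rewrite big_ord1 /= expr0 mul1r mulr1n expT0.
rewrite iterSr IH.
rewrite (eq_bigr (fun i : 'I_n.+1 => (c ^+ (n - i) * (f (mulO (expO (TO F) i.+1) x) + c * f (mulO (expO (TO F) i) x))) *+ 'C(n, i))); last first.
  by move=> i _; rewrite DeltaME mulT_expT.
rewrite -(pascal c (fun i => f (mulO (expO (TO F) i) x))) -big_split /=.
apply: eq_bigr => i _; rewrite -mulrnDl; congr (_ *+ _).
by rewrite mulrDr mulrA -exprSr -subSn // -ltnS.
Qed.

End Final.

Unset Implicit Arguments.

Theorem corollary9 (F : finFieldType) (f : pser F -> lser F) (hf : LC f)
  (m n : nat) (x : pser F) :
  iter n (DeltaM m) f x =
  \sum_(0 <= i < n.+1) \sum_(i <= j < n.+1)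
     scaleL ((-1) ^+ (n - i) * ('C(n, j))%:R)
       (mulL (mulL (expL (bracket F m) (n - j)) (f (mulO (expO (TO F) i) x)))
             (hasseD i (expL (TL F) j))).
Proof.
rewrite iterD big_mkord; apply: eq_bigr => -[i hi] _ /=.
set y := f (mulO (expO (TO F) i) x).
set B := bracket F m.
rewrite (@eq_big_nat _ _ _ _ _ _ (fun j => (((-1) ^+ (n - i) * ((B ^+ (n - j) * y) * ('C(j, i)%:R * TL F ^+ (j - i)))) *+ 'C(n, j)))); last first.
  by move=> j /andP[hij _]; rewrite scaleLE !mulLE !expLE hasse_Tn.
rewrite (big_addn 0 n.+1 i) big_mkord subSn; last by rewrite -ltnS.
rewrite [in LHS]exprNn [in LHS]exprDn.
rewrite mulr_sumr mulr_suml -sumrMnl.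
apply: eq_bigr => -[l hl] _ /=.
rewrite (addnC l i) addKn subnDA.
have hil : (i + l <= n)%N by lia.
apply: final_alg; exact: binC2.
Qed.
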